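(* Let $k\in \mathbb{Z}_+$, $\varepsilon\in (0,1)$, let $X\subset \mathbb{R}^d$ with $|X|=n$, and let $D$ be a simultaneous $\varepsilon$-coreset of $X$ for $k$-facility $p$-Centrum for all $p\in \{1,\dots,n\}$, i.e. for every $p\in\{1,\dots,n\}$ and every $C\subset\mathbb{R}^d$ with $|C|=k$, $\mathrm{cost}_p(D,C)\in[(1-\varepsilon)\mathrm{cost}_p(X,C),(1+\varepsilon)\mathrm{cost}_p(X,C)]$. Then $D$ is a simultaneous $\varepsilon$-coreset of $X$ for Ordered $k$-Median, i.e. for every $C\subset\mathbb{R}^d$ with $|C|=k$ and every $v\in\mathbb{R}^n$ with $v_1\ge\cdots\ge v_n\ge0$, $\mathrm{cost}_v(D,C)\in[(1-\varepsilon)\mathrm{cost}_v(X,C),(1+\varepsilon)\mathrm{cost}_v(X,C)]$.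
   Context: Distances are Euclidean and $d(x,C):=\min_{c\in C}d(x,c)$. $D$ is a finite multiset (weighted set with positive integer weights). For a finite multiset $Y$ whose elements are ordered (with multiplicity) so that $d(y_1,C)\ge d(y_2,C)\ge\cdots$, $\mathrm{cost}_p(Y,C):=\sum_{i=1}^{\min(p,|Y|)}d(y_i,C)$ and, for $v\in\mathbb{R}^n$, $\mathrm{cost}_v(Y,C):=\sum_{i=1}^{\min(n,|Y|)}v_i\,d(y_i,C)$. *)

(* Defs.v *)
From mathcomp Require Import all_boot all_order all_algebra.
Set Implicit Arguments. Unset Strict Implicit. Unset Printing Implicit Defensive.
Import Order.TTheory GRing.Theory Num.Theory.
Local Open Scope ring_scope.

Definition edist (R : rcfType) (d : nat) (x y : 'rV[R]_d) : R :=
  Num.sqrt (\sum_(i < d) (x 0 i - y 0 i) ^+ 2).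

(* d(x, C) = min_{c in C} d(x, c); C is given as a (duplicate-free) list of
   centers; for C = [::] we return 0 (never used: |C| = k >= 1). *)
Definition dist_to (R : rcfType) (d : nat) (C : seq 'rV[R]_d) (x : 'rV[R]_d) : R :=
  match C with
  | [::] => 0
  | c :: cs => foldr (fun c' m => Num.min (edist x c') m) (edist x c) cs
  end.

(* distances of the elements of the multiset Y (a list, with multiplicity)
   to C, sorted nonincreasingly *)
Definition sorted_dists (R : rcfType) (d : nat) (Y C : seq 'rV[R]_d) : seq R :=
  sort (fun a b : R => b <= a) (map (dist_to C) Y).

(* cost_p(Y,C) = sum of the min(p,|Y|) largest distances (0-based indices) *)
Definition cost_p (R : rcfType) (d : nat) (p : nat) (Y C : seq 'rV[R]_d) : R :=
  \sum_(i < size Y | (i < p)%N) nth 0 (sorted_dists Y C) i.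

(* cost_v(Y,C) = sum_{i < min(n,|Y|)} v_i d(y_i,C) (0-based indices) *)
Definition cost_v (R : rcfType) (d n : nat) (v : 'I_n -> R) (Y C : seq 'rV[R]_d) : R :=
  \sum_(i < n | (i < size Y)%N) v i * nth 0 (sorted_dists Y C) i.

(* Main.v *)
Require Import Defs.
From mathcomp Require Import all_boot all_order all_algebra.
From mathcomp Require Import ring.
Import Order.TTheory GRing.Theory Num.Theory.
Local Open Scope ring_scope.

Lemma abel_sum (R : comRingType) (a g : nat -> R) (n : nat) :
  \sum_(i < n) a i * g i =
  \sum_(j < n) (a j - a j.+1) * (\sum_(i < j.+1) g i) + a n * \sum_(i < n) g i.
Proof.
elim: n => [|n IH]; first by rewrite !big_ord0 mulr0 addr0.
rewrite big_ord_recr /= IH [in RHS]big_ord_recr /= [\sum_(i < n.+1) g i]big_ord_recr /=.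
ring.
Qed.

Lemma swap_filter (R : comRingType) (m p : nat) (F : nat -> R) :
  \sum_(i < m | (i < p)%N) F i = \sum_(i < p | (i < m)%N) F i.
Proof.
rewrite -(big_mkord (fun i => (i < p)%N)) -(big_mkord (fun i => (i < m)%N)).
rewrite (@big_nat_widen _ _ _ 0 m (m + p)) ?leq_addr //.
rewrite (@big_nat_widen _ _ _ 0 p (m + p)) ?leq_addl //.
by apply: eq_bigl => i; rewrite andbC.
Qed.

Theorem lemma4p7 (R : rcfType) (d k n : nat) (eps : R)
  (X D : seq 'rV[R]_d) :
  (0 < k)%N -> 0 < eps < 1 ->
  uniq X -> size X = n ->
  (forall (p : nat) (C : seq 'rV[R]_d),
      (1 <= p <= n)%N -> uniq C -> size C = k ->
      (1 - eps) * cost_p p X C <= cost_p p D C <= (1 + eps) * cost_p p X C) ->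
  forall (C : seq 'rV[R]_d) (v : 'I_n -> R),
    uniq C -> size C = k ->
    (forall i j : 'I_n, (i <= j)%N -> v j <= v i) ->
    (forall i : 'I_n, 0 <= v i) ->
    (1 - eps) * cost_v v X C <= cost_v v D C <= (1 + eps) * cost_v v X C.
Proof.
move=> _ _ _ _ Hc C v uC sC vmono vpos.
pose gY (Y : seq 'rV[R]_d) := fun i : nat =>
  if (i < size Y)%N then nth 0 (sorted_dists Y C) i else 0.
pose vn (i : nat) : R := if @insub _ (fun j => (j < n)%N) 'I_n i is Some j then v j else 0.
have vnE (j : 'I_n) : vn j = v j.
  rewrite /vn; case: insubP => [u _ /val_inj -> //|]; by rewrite ltn_ord.
have vnn : vn n = 0.
  rewrite /vn; case: insubP => [u _ hu|//]; by have := ltn_ord u; rewrite hu ltnn.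
have hp p Y : cost_p p Y C = \sum_(i < p) gY Y i.
  by rewrite /cost_p swap_filter big_mkcond.
have hv Y : cost_v v Y C = \sum_(j < n) (vn j - vn j.+1) * cost_p j.+1 Y C.
  rewrite /cost_v big_mkcond /=.
  transitivity (\sum_(i < n) vn i * gY Y i).
    by apply: eq_bigr => i _; rewrite vnE /gY; case: ifP => _; rewrite ?mulr0.
  rewrite abel_sum vnn mul0r addr0; apply: eq_bigr => j _; by rewrite hp.
have wpos (j : 'I_n) : 0 <= vn j - vn j.+1.
  rewrite subr_ge0 vnE /vn; case: insubP => [u _ hu|_]; last exact: vpos.
  by apply: vmono; rewrite hu.
rewrite !hv !mulr_sumr; apply/andP; split; apply: ler_sum => j _;
  rewrite mulrCA; apply: ler_wpM2l => //;
  have /andP[h1 h2] := Hc j.+1 C (ltn_ord j) uC sC => //.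
Qed.
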